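(* Let $\mathcal{H}_A,\mathcal{H}_B$ be complex Hilbert spaces of equal finite dimension $N$, let $\mathcal{H}_{AB}=\mathcal{H}_A\otimes\mathcal{H}_B$, let $0\le s\le\log N$, and let $\mathcal{E}=\mathcal{E}_A\otimes\mathcal{E}_B$ be a product of quantum channels (CPTP maps) $\mathcal{E}_A$ on $\mathcal{H}_A$ and $\mathcal{E}_B$ on $\mathcal{H}_B$. Then the optimal (smallest) privacy parameter $\varepsilon^*(s)$ for which $\mathcal{E}$ is ECLM-$\varepsilon$-QLDP on $\mathbb{H}_s$ is $$\varepsilon^*(s)=\log \max_{\ket{\phi_a}\in\mathcal{H}_A}\ \max_{\ket{\phi_b}\in\mathcal{H}_B}\ \frac{J_{\max}(\mathcal{K}_\phi,s)}{J_{\min}(\mathcal{K}_\phi,s)},$$ where the maxima range over unit vectors, $\mathcal{K}_\phi=\mathcal{E}_A^\dagger(\ket{\phi_a}\bra{\phi_a})\otimes\mathcal{E}_B^\dagger(\ket{\phi_b}\bra{\phi_b})$, and the ratio is interpreted as $+\infty$ (so $\varepsilon^*(s)=+\infty$, i.e. no finite $\varepsilon$ works) when the denominator vanishes and the numerator is positive.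
   Context: Entanglement entropy: for a unit vector $\ket{\psi}\in\mathcal{H}_{AB}$ with Schmidt decomposition $\ket{\psi}=\sum_j\sqrt{\lambda_j}\ket{j_A}\otimes\ket{j_B}$, $\mathbf{E}(\psi)=-\sum_j\lambda_j\log\lambda_j$ (the von Neumann entropy of the reduced state $\operatorname{Tr}_B\ket{\psi}\bra{\psi}$). The entanglement-constrained domain is $\mathbb{H}_s=\{\rho=\ket{\psi}\bra{\psi}:\ \ket{\psi}\in\mathcal{H}_{AB}\text{ unit},\ \mathbf{E}(\psi)\ge s\}$; pure states are identified with their rank-one density operators. $\mathcal{E}^\dagger$ denotes the Hilbert–Schmidt adjoint of a channel, so $\operatorname{Tr}(M\,\mathcal{E}(\rho))=\operatorname{Tr}(\mathcal{E}^\dagger(M)\rho)$. A local measurement (LM) adversary is a product POVM $\{\mathcal{M}_a\otimes\mathcal{M}_b\}_{(a,b)\in O_A\times O_B}$, where $\{\mathcal{M}_a\}_{a\in O_A}$ and $\{\mathcal{M}_b\}_{b\in O_B}$ are finite POVMs on $\mathcal{H}_A$ and $\mathcal{H}_B$; the outcome distribution on input $\rho$ is $\Pr[(a,b)]=\operatorname{Tr}((\mathcal{M}_a\otimes\mathcal{M}_b)\mathcal{E}(\rho))$. The mechanism $\mathcal{E}$ is ECLM-$\varepsilon$-QLDP on $\mathbb{H}_s$ if for every LM adversary $\mathcal{M}$, every $\rho,\rho'\in\mathbb{H}_s$ and every $T\subseteq O_A\times O_B$: $\Pr[\mathcal{M}(\mathcal{E}(\rho))\in T]\le e^{\varepsilon}\Pr[\mathcal{M}(\mathcal{E}(\rho'))\in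 T]$. For a positive semidefinite operator $\mathcal{K}$ on $\mathcal{H}_{AB}$: $J_{\max}(\mathcal{K},s)=\max_{\ket{\psi}\bra{\psi}\in\mathbb{H}_s}\bra{\psi}\mathcal{K}\ket{\psi}$ and $J_{\min}(\mathcal{K},s)=\min_{\ket{\psi}\bra{\psi}\in\mathbb{H}_s}\bra{\psi}\mathcal{K}\ket{\psi}$. *)

(* Defs.v *)
From HB Require Import structures.
From mathcomp Require Import all_boot all_order all_algebra.
From mathcomp Require Import all_classical all_reals.
From mathcomp Require Import ereal sequences exp.
From mathcomp Require Import complex mxtens.

Set Implicit Arguments.
Unset Strict Implicit.
Unset Printing Implicit Defensive.

Import Order.TTheory GRing.Theory Num.Theory.
Local Open Scope ring_scope.

Section Quantum.
Variable R : realType.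
Local Notation C := (R[i]).

Definition adjmx m n (A : 'M[C]_(m, n)) : 'M[C]_(n, m) := (map_mx (@conjc R) A)^T.

Definition psd n (M : 'M[C]_n) : Prop :=
  adjmx M = M /\ forall v : 'cV[C]_n, 0 <= (adjmx v *m M *m v) 0 0.

Definition unit_vec n (v : 'cV[C]_n) : Prop := (adjmx v *m v) 0 0 = 1.

Definition unitary n (U : 'M[C]_n) : Prop := adjmx U *m U = 1%:M.

Definition proj n (v : 'cV[C]_n) : 'M[C]_n := v *m adjmx v.

Definition lin_map N (E : 'M[C]_N -> 'M[C]_N) : Prop :=
  forall (a : C) (X Y : 'M[C]_N), E (a *: X + Y) = a *: E X + E Y.

Definition blk k N (X : 'M[C]_(k * N)) (i j : 'I_k) : 'M[C]_N :=
  \matrix_(p, q) X (mxtens_index (i, p)) (mxtens_index (j, q)).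

Definition ampl k N (E : 'M[C]_N -> 'M[C]_N) (X : 'M[C]_(k * N)) : 'M[C]_(k * N) :=
  \sum_(i < k) \sum_(j < k) (delta_mx i j *t E (blk X i j)).

Definition CP N (E : 'M[C]_N -> 'M[C]_N) : Prop :=
  forall (k : nat) (X : 'M[C]_(k * N)), psd X -> psd (ampl E X).

Definition TP N (E : 'M[C]_N -> 'M[C]_N) : Prop := forall X, \tr (E X) = \tr X.

Definition channel N (E : 'M[C]_N -> 'M[C]_N) : Prop := [/\ lin_map E, CP E & TP E].

(* the product channel E_A (x) E_B on H_A (x) H_B, defined by linearity from
   (E_A (x) E_B)(|i><j| (x) |k><l|) = E_A(|i><j|) (x) E_B(|k><l|) *)
Definition prod_chan N (EA EB : 'M[C]_N -> 'M[C]_N) (X : 'M[C]_(N * N)) : 'M[C]_(N * N) :=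
  \sum_(i < N) \sum_(j < N) \sum_(k < N) \sum_(l < N)
    X (mxtens_index (i, k)) (mxtens_index (j, l)) *:
      (EA (delta_mx i j) *t EB (delta_mx k l)).

(* Hilbert-Schmidt adjoint: Tr (M E(rho)) = Tr (E^dag(M) rho) *)
Definition hs_adj N (E : 'M[C]_N -> 'M[C]_N) (M : 'M[C]_N) : 'M[C]_N :=
  \matrix_(j, i) \tr (M *m E (delta_mx i j)).

Definition schmidt N (psi : 'cV[C]_(N * N)) (lam : 'I_N -> R) : Prop :=
  (forall j, 0 <= lam j) /\
  exists U V : 'M[C]_N, [/\ unitary U, unitary V &
    psi = \sum_(j < N) Complex (Num.sqrt (lam j)) 0 *: (col j U *t col j V)].

(* entanglement entropy E(psi) = - sum_j lam_j log lam_j (0 log 0 = 0);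
   the Schmidt coefficients are unique up to order, so this set is a singleton
   for a unit vector and sup picks its element *)
Definition ent N (psi : 'cV[C]_(N * N)) : R :=
  sup [set h | exists lam, schmidt psi lam /\ h = - \sum_(j < N) lam j * ln (lam j)].

Definition in_Hs N (s : R) (psi : 'cV[C]_(N * N)) : Prop :=
  unit_vec psi /\ s <= ent psi.

Definition povm N (O : finType) (M : O -> 'M[C]_N) : Prop :=
  (forall a, psd (M a)) /\ \sum_(a : O) M a = 1%:M.

Definition lm_prob N (E : 'M[C]_(N * N) -> 'M[C]_(N * N)) (OA OB : finType)
  (MA : OA -> 'M[C]_N) (MB : OB -> 'M[C]_N) (rho : 'M[C]_(N * N)) (ab : OA * OB) : R :=
  complex.Re (\tr ((MA ab.1 *t MB ab.2) *m E rho)).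

Definition eclm_qldp N (E : 'M[C]_(N * N) -> 'M[C]_(N * N)) (s eps : R) : Prop :=
  forall (OA OB : finType) (MA : OA -> 'M[C]_N) (MB : OB -> 'M[C]_N),
    povm MA -> povm MB ->
    forall psi psi' : 'cV[C]_(N * N), in_Hs s psi -> in_Hs s psi' ->
    forall T : {set OA * OB},
      \sum_(ab in T) lm_prob E MA MB (proj psi) ab <=
      expR eps * \sum_(ab in T) lm_prob E MA MB (proj psi') ab.

Definition eps_star N (E : 'M[C]_(N * N) -> 'M[C]_(N * N)) (s : R) : \bar R :=
  ereal_inf [set (eps%:E)%E | eps in [set eps : R | eclm_qldp E s eps]].

Definition Jmax N (K : 'M[C]_(N * N)) (s : R) : R :=
  sup [set complex.Re ((adjmx psi *m K *m psi) 0 0) | psi in [set psi | in_Hs s psi]].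
Definition Jmin N (K : 'M[C]_(N * N)) (s : R) : R :=
  inf [set complex.Re ((adjmx psi *m K *m psi) 0 0) | psi in [set psi | in_Hs s psi]].

(* log (J_max / J_min) with the convention: +oo if J_min = 0 < J_max;
   the degenerate case K_phi = 0 (0/0) is given the value 0 (it never
   constrains the privacy parameter) *)
Definition log_ratio (jmax jmin : R) : \bar R :=
  if 0 < jmin then (ln (jmax / jmin))%:E
  else if 0 < jmax then +oo%E else 0%E.

Definition K_phi N (EA EB : 'M[C]_N -> 'M[C]_N) (pa pb : 'cV[C]_N) : 'M[C]_(N * N) :=
  hs_adj EA (proj pa) *t hs_adj EB (proj pb).

Definition eps_formula N (EA EB : 'M[C]_N -> 'M[C]_N) (s : R) : \bar R :=
  ereal_sup [set log_ratio (Jmax (K_phi EA EB pa pb) s) (Jmin (K_phi EA EB pa pb) s)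
            | pa in [set pa : 'cV[C]_N | unit_vec pa] & pb in [set pb : 'cV[C]_N | unit_vec pb]].

End Quantum.

(* Main.v *)
Require Import Defs.
From HB Require Import structures.
From mathcomp Require Import all_boot all_order all_algebra.
From mathcomp Require Import all_classical all_reals.
From mathcomp Require Import ereal sequences exp.
From mathcomp Require Import complex mxtens spectral sesquilinear lra.
Import Order.TTheory GRing.Theory Num.Theory.
Local Open Scope ring_scope.

Set Implicit Arguments.
Unset Strict Implicit.
Unset Printing Implicit Defensive.

Section Q.
Variable R : realType.
Local Notation C := (R[i]).
Local Notation proj := Defs.proj.

Lemma adjmxE m n (A : 'M[C]_(m, n)) i j : adjmx A i j = conjc (A j i).
Proof. by rewrite !mxE. Qed.

Lemma adjmxK m n (A : 'M[C]_(m, n)) : adjmx (adjmx A) = A.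
Proof. by apply/matrixP=> i j; rewrite !adjmxE conjcK. Qed.

Lemma adjmxM m n p (A : 'M[C]_(m, n)) (B : 'M[C]_(n, p)) :
  adjmx (A *m B) = adjmx B *m adjmx A.
Proof.
apply/matrixP=> i j; rewrite !mxE rmorph_sum; apply: eq_bigr => k _.
by rewrite !mxE rmorphM mulrC.
Qed.

Lemma adjmxD m n (A B : 'M[C]_(m, n)) : adjmx (A + B) = adjmx A + adjmx B.
Proof. by apply/matrixP=> i j; rewrite !mxE rmorphD. Qed.

Lemma adjmxZ m n a (A : 'M[C]_(m, n)) : adjmx (a *: A) = conjc a *: adjmx A.
Proof. by apply/matrixP=> i j; rewrite !mxE rmorphM. Qed.

Lemma adjmxN m n (A : 'M[C]_(m, n)) : adjmx (- A) = - adjmx A.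
Proof. by apply/matrixP=> i j; rewrite !mxE rmorphN. Qed.

Lemma adjmx1 n : adjmx (1%:M : 'M[C]_n) = 1%:M.
Proof. by apply/matrixP=> i j; rewrite !mxE rmorph_nat eq_sym. Qed.

Lemma adjmx_tens m n p q (A : 'M[C]_(m, n)) (B : 'M[C]_(p, q)) :
  adjmx (A *t B) = adjmx A *t adjmx B.
Proof. by apply/matrixP=> i j; rewrite !mxE rmorphM. Qed.

Lemma adjmx_sum m n I (r : seq I) (P : pred I) (F : I -> 'M[C]_(m, n)) :
  adjmx (\sum_(i <- r | P i) F i) = \sum_(i <- r | P i) adjmx (F i).
Proof.
apply/matrixP=> a b; rewrite !mxE !summxE rmorph_sum; apply: eq_bigr => i _.
by rewrite !mxE.
Qed.

Definition qf n (K : 'M[C]_n) (v : 'cV[C]_n) : C := (adjmx v *m K *m v) 0 0.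

Lemma dot_ge0 n (w : 'cV[C]_n) : 0 <= (adjmx w *m w) 0 0.
Proof.
rewrite !mxE; apply: sumr_ge0 => k _; rewrite !mxE mulrC; exact: mulcJ_ge0.
Qed.

Lemma psd_AtA m n (B : 'M[C]_(m, n)) : psd (adjmx B *m B).
Proof.
split; first by rewrite adjmxM adjmxK.
move=> v; rewrite mulmxA -[_ *m B *m v]mulmxA -adjmxM; exact: dot_ge0.
Qed.

Lemma proj_AtA n (p : 'cV[C]_n) : proj p = adjmx (adjmx p) *m adjmx p.
Proof. by rewrite adjmxK. Qed.

Lemma psd_proj n (p : 'cV[C]_n) : psd (proj p).
Proof. rewrite proj_AtA; exact: psd_AtA. Qed.

Lemma sum_tens (V : nmodType) m n (F : 'I_(m * n) -> V) :
  \sum_(k < m * n) F k = \sum_(i < m) \sum_(j < n) F (mxtens_index (i, j)).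
Proof.
rewrite pair_big /= (reindex (@mxtens_index m n)) /=; last first.
  by exists (@mxtens_unindex m n) => k _; rewrite (mxtens_indexK, mxtens_unindexK).
by apply: eq_bigr => -[i j].
Qed.

Lemma tr_tens m n (A : 'M[C]_m) (B : 'M[C]_n) : \tr (A *t B) = \tr A * \tr B.
Proof.
rewrite /mxtrace mulr_sum; apply: eq_bigr => k _; by rewrite !mxE.
Qed.


Lemma hs_adjE n (E : 'M[C]_n -> 'M[C]_n) M i j :
  hs_adj E M i j = \tr (M *m E (delta_mx j i)).
Proof. by rewrite mxE. Qed.

Lemma tr_mul_sum m k (M : 'M[C]_m) (F : 'I_k -> 'M[C]_m) :
  \tr (M *m \sum_(i < k) F i) = \sum_(i < k) \tr (M *m F i).
Proof. by rewrite mulmx_sumr raddf_sum. Qed.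

Lemma tr_mulE m (M X : 'M[C]_m) : \tr (M *m X) = \sum_k \sum_l M k l * X l k.
Proof. by apply: eq_bigr => k _; rewrite mxE. Qed.

Lemma tr_prod_chan n (EA EB : 'M[C]_n -> 'M[C]_n) (A B : 'M[C]_n) X :
  \tr ((A *t B) *m prod_chan EA EB X) = \tr ((hs_adj EA A *t hs_adj EB B) *m X).
Proof.
rewrite /prod_chan tr_mul_sum.
under eq_bigr do rewrite tr_mul_sum.
under eq_bigr do under eq_bigr do rewrite tr_mul_sum.
under eq_bigr do under eq_bigr do under eq_bigr do rewrite tr_mul_sum.
rewrite tr_mulE sum_tens.
under [RHS]eq_bigr do under eq_bigr do rewrite sum_tens.
rewrite exchange_big /=; apply: eq_bigr => j _.
rewrite [RHS]exchange_big /=; apply: eq_bigr => i _.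
rewrite [RHS]exchange_big /=; apply: eq_bigr => k _; apply: eq_bigr => l _.
rewrite -scalemxAr mxtraceZ tensmx_mul tr_tens tensmxE !hs_adjE.
by rewrite mulrC.
Qed.

Lemma tr_proj n (K : 'M[C]_n) v : \tr (K *m proj v) = qf K v.
Proof.
by rewrite /proj /qf mulmxA mxtrace_mulC mulmxA trace_mx11.
Qed.

Lemma lm_probE n (EA EB : 'M[C]_n -> 'M[C]_n) (OA OB : finType)
  (MA : OA -> 'M[C]_n) (MB : OB -> 'M[C]_n) psi ab :
  lm_prob (prod_chan EA EB) MA MB (proj psi) ab =
  complex.Re (qf (hs_adj EA (MA ab.1) *t hs_adj EB (MB ab.2)) psi).
Proof. by rewrite /lm_prob tr_prod_chan tr_proj. Qed.


Lemma ReD (x y : C) : complex.Re (x + y) = complex.Re x + complex.Re y.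
Proof. by case: x => a b; case: y. Qed.
Lemma ImD (x y : C) : complex.Im (x + y) = complex.Im x + complex.Im y.
Proof. by case: x => a b; case: y. Qed.
Lemma ReM (x y : C) : complex.Re (x * y) = complex.Re x * complex.Re y - complex.Im x * complex.Im y.
Proof. by case: x => a b; case: y. Qed.
Lemma ImM (x y : C) : complex.Im (x * y) = complex.Re x * complex.Im y + complex.Im x * complex.Re y.
Proof. by case: x => a b; case: y. Qed.
Lemma Re0 : complex.Re (0 : C) = 0. Proof. by []. Qed.
Lemma Im0 : complex.Im (0 : C) = 0. Proof. by []. Qed.
Lemma Re_sum I (r : seq I) (P : pred I) (F : I -> C) :
  complex.Re (\sum_(i <- r | P i) F i) = \sum_(i <- r | P i) complex.Re (F i).
Proof. exact: (big_morph _ ReD Re0). Qed.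
Lemma Im_sum I (r : seq I) (P : pred I) (F : I -> C) :
  complex.Im (\sum_(i <- r | P i) F i) = \sum_(i <- r | P i) complex.Im (F i).
Proof. exact: (big_morph _ ImD Im0). Qed.
Lemma ge0_Im (x : C) : 0 <= x -> complex.Im x = 0.
Proof. exact: ger0_Im. Qed.
Lemma ge0_Re (x : C) : 0 <= x -> 0 <= complex.Re x.
Proof. by case: x => a b; rewrite lecE => /andP[]. Qed.
Lemma ReM_real (x y : C) : complex.Im x = 0 -> complex.Re (x * y) = complex.Re x * complex.Re y.
Proof. by move=> h; rewrite ReM h mul0r subr0. Qed.
Lemma le_Re (x y : C) : x <= y -> complex.Re x <= complex.Re y.
Proof. by rewrite lecE => /andP[]. Qed.
Lemma ge0_real (x : C) : 0 <= x -> x = ((complex.Re x)%:C)%C.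
Proof. by case: x => a b /ge0_Im /= ->. Qed.

Section Lin.
Variables (n : nat) (E : 'M[C]_n -> 'M[C]_n).
Hypothesis hE : lin_map E.
Lemma linE0 : E 0 = 0.
Proof.
have := hE 1 0 0; rewrite !scale1r addr0 => h.
by apply: (addrI (E 0)); rewrite addr0 -h.
Qed.
Lemma linED X Y : E (X + Y) = E X + E Y.
Proof. by have := hE 1 X Y; rewrite !scale1r. Qed.
Lemma linEZ a X : E (a *: X) = a *: E X.
Proof. by have := hE a X 0; rewrite !addr0 linE0 addr0. Qed.
Lemma linE_sum I (r : seq I) (P : pred I) (F : I -> 'M[C]_n) :
  E (\sum_(i <- r | P i) F i) = \sum_(i <- r | P i) E (F i).
Proof. exact: (big_morph _ linED linE0). Qed.
End Lin.

Lemma hs_adjD n (E : 'M[C]_n -> 'M[C]_n) M1 M2 :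
  hs_adj E (M1 + M2) = hs_adj E M1 + hs_adj E M2.
Proof. by apply/matrixP=> i j; rewrite !mxE mulmxDl mxtraceD. Qed.
Lemma hs_adjZ n (E : 'M[C]_n -> 'M[C]_n) a M :
  hs_adj E (a *: M) = a *: hs_adj E M.
Proof. by apply/matrixP=> i j; rewrite !mxE -scalemxAl mxtraceZ. Qed.
Lemma hs_adj0 n (E : 'M[C]_n -> 'M[C]_n) : hs_adj E 0 = 0.
Proof. by apply/matrixP=> i j; rewrite !mxE mul0mx mxtrace0. Qed.
Lemma hs_adj_sum n (E : 'M[C]_n -> 'M[C]_n) I (r : seq I) (P : pred I) F :
  hs_adj E (\sum_(i <- r | P i) F i) = \sum_(i <- r | P i) hs_adj E (F i).
Proof. exact: (big_morph _ (hs_adjD E) (hs_adj0 E)). Qed.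

Lemma tensDl m n p q (A1 A2 : 'M[C]_(m, n)) (B : 'M[C]_(p, q)) :
  (A1 + A2) *t B = A1 *t B + A2 *t B.
Proof. by apply/matrixP=> i j; rewrite !mxE mulrDl. Qed.
Lemma tensDr m n p q (A : 'M[C]_(m, n)) (B1 B2 : 'M[C]_(p, q)) :
  A *t (B1 + B2) = A *t B1 + A *t B2.
Proof. by apply/matrixP=> i j; rewrite !mxE mulrDr. Qed.
Lemma tensZl m n p q a (A : 'M[C]_(m, n)) (B : 'M[C]_(p, q)) :
  (a *: A) *t B = a *: (A *t B).
Proof. by apply/matrixP=> i j; rewrite !mxE mulrA. Qed.
Lemma tensZr m n p q a (A : 'M[C]_(m, n)) (B : 'M[C]_(p, q)) :
  A *t (a *: B) = a *: (A *t B).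
Proof. by apply/matrixP=> i j; rewrite !mxE mulrCA. Qed.
Lemma tens_suml m n p q I (r : seq I) (F : I -> 'M[C]_(m, n)) (B : 'M[C]_(p, q)) :
  (\sum_(i <- r) F i) *t B = \sum_(i <- r) (F i *t B).
Proof.
elim: r => [|x r IH]; first by rewrite !big_nil tens0mx.
by rewrite !big_cons tensDl IH.
Qed.
Lemma tens_sumr m n p q I (r : seq I) (A : 'M[C]_(m, n)) (F : I -> 'M[C]_(p, q)) :
  A *t (\sum_(i <- r) F i) = \sum_(i <- r) (A *t F i).
Proof.
elim: r => [|x r IH]; first by rewrite !big_nil tensmx0.
by rewrite !big_cons tensDr IH.
Qed.

Lemma qfD n (K1 K2 : 'M[C]_n) v : qf (K1 + K2) v = qf K1 v + qf K2 v.
Proof. by rewrite /qf mulmxDr mulmxDl mxE. Qed.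
Lemma qfZ n a (K : 'M[C]_n) v : qf (a *: K) v = a * qf K v.
Proof. by rewrite /qf -scalemxAr -scalemxAl mxE. Qed.
Lemma qf0 n (v : 'cV[C]_n) : qf 0 v = 0.
Proof. by rewrite /qf mulmx0 mul0mx mxE. Qed.
Lemma qfN n (K : 'M[C]_n) v : qf (- K) v = - qf K v.
Proof. by rewrite -scaleN1r qfZ mulN1r. Qed.
Lemma qf_sum n I (r : seq I) (P : pred I) (F : I -> 'M[C]_n) v :
  qf (\sum_(i <- r | P i) F i) v = \sum_(i <- r | P i) qf (F i) v.
Proof. exact: (big_morph _ (fun a b => qfD a b v) (qf0 v)). Qed.


Lemma mxDE m n (A B : 'M[C]_(m, n)) i j : (A + B) i j = A i j + B i j.
Proof. by rewrite mxE. Qed.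
Lemma mxZE m n a (A : 'M[C]_(m, n)) i j : (a *: A) i j = a * A i j.
Proof. by rewrite mxE. Qed.

Definition bf n (A : 'M[C]_n) (x y : 'cV[C]_n) : C := (adjmx x *m A *m y) 0 0.

Lemma qf_addv n (A : 'M[C]_n) x y :
  qf A (x + y) = qf A x + bf A x y + bf A y x + qf A y.
Proof.
rewrite /qf /bf adjmxD !mulmxDl !mulmxDr !mxDE.
by rewrite -!addrA; congr (_ + _); rewrite addrC -!addrA; congr (_ + _); rewrite addrC.
Qed.

Lemma bf_scaler n (A : 'M[C]_n) x c y : bf A x (c *: y) = c * bf A x y.
Proof. by rewrite /bf -scalemxAr mxZE. Qed.
Lemma bf_scalel n (A : 'M[C]_n) x c y : bf A (c *: y) x = conjc c * bf A y x.
Proof. by rewrite /bf adjmxZ -!scalemxAl mxZE. Qed.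
Lemma qf_scale n (A : 'M[C]_n) c y : qf A (c *: y) = conjc c * c * qf A y.
Proof. by rewrite /qf adjmxZ -!scalemxAl -scalemxAr !mxZE mulrA. Qed.

Lemma adjmx_delta m n (i : 'I_m) (j : 'I_n) : adjmx (delta_mx i j : 'M[C]_(m,n)) = delta_mx j i.
Proof. by apply/matrixP=> a b; rewrite !mxE rmorph_nat andbC. Qed.

Lemma bf_delta n (A : 'M[C]_n) i j : bf A (delta_mx i 0) (delta_mx j 0) = A i j.
Proof. by rewrite /bf adjmx_delta -rowE -colE !mxE. Qed.

Lemma posq_herm n (A : 'M[C]_n) : (forall v, 0 <= qf A v) -> adjmx A = A.
Proof.
move=> hA; apply/matrixP => i j; rewrite adjmxE.
have qd k : qf A (delta_mx k 0) = A k k by rewrite /qf -/(bf _ _ _) bf_delta.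
have h0 k : complex.Im (A k k) = 0 by rewrite -qd; apply: ge0_Im.
have h1 := ge0_Im (hA (delta_mx i 0 + delta_mx j 0)).
rewrite qf_addv !bf_delta !qd !ImD h0 h0 add0r addr0 in h1.
have h2 := ge0_Im (hA (delta_mx i 0 + 'i%C *: delta_mx j 0)).
rewrite qf_addv bf_scaler bf_scalel qf_scale !bf_delta !qd !ImD in h2.
rewrite !ImM h0 h0 /= in h2.
move: h1 h2; case: (A i j) => a b; case: (A j i) => c d /= h1 h2.
apply/eqP; rewrite eq_complex /=; apply/andP; split; apply/eqP; lra.
Qed.


Lemma adjmx_tC m n (M : 'M[C]_(m, n)) : adjmx M = map_mx Num.conj_op (M ^T).
Proof. by apply/matrixP=> i j; rewrite !mxE. Qed.

Lemma qf_proj n (v w : 'cV[C]_n) :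
  qf (proj v) w = (adjmx w *m v) 0 0 * (adjmx v *m w) 0 0.
Proof.
by rewrite /qf /proj !mulmxA -[_ *m adjmx v *m w]mulmxA [in LHS]mxE big_ord1.
Qed.

Lemma psd_decomp n (M : 'M[C]_n) : psd M ->
  exists d : 'I_n -> C, exists u : 'I_n -> 'cV[C]_n,
    [/\ forall i, 0 <= d i, forall i, unit_vec (u i) & M = \sum_i d i *: proj (u i)].
Proof.
move=> [hH hP].
have hN : M \is normalmx.
  by rewrite qualifE -!adjmx_tC hH.
set P := spectralmx M; set D := spectral_diag M.
have hU : P \is unitarymx := spectral_unitarymx M.
have hPP : P *m (map_mx Num.conj_op P^T) = 1%:M by apply/unitarymxP.
have eM : M = invmx P *m diag_mx D *m P by apply/orthomx_spectralP.
rewrite invmx_unitary // in eM.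
pose u i : 'cV[C]_n := \col_k conjc (P i k).
have dot i j : (adjmx (u i) *m u j) 0 0 = (i == j)%:R.
  have := congr1 (fun X : 'M[C]_n => X i j) hPP; rewrite !mxE => <-.
  by apply: eq_bigr => k _; rewrite !mxE conjcK.
have eM2 : M = \sum_i D 0 i *: proj (u i).
  apply/matrixP => a b; rewrite eM summxE mul_mx_diag !mxE.
  apply: eq_bigr => k _; rewrite /proj !mxE big_ord1 !mxE conjcK.
  by rewrite mulrCA mulrA [_ * D 0 k]mulrC -mulrA.
exists (fun i => D 0 i), u; split => //; last first.
  by move=> i; rewrite /unit_vec dot eqxx.
move=> i; have e : qf M (u i) = D 0 i.
  rewrite {1}eM2 qf_sum (bigD1 i) //= big1 ?addr0.
    by rewrite qfZ qf_proj !dot eqxx mulr1 mulr1.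
  by move=> j /negbTE nji; rewrite qfZ qf_proj dot eq_sym nji mul0r mulr0.
by rewrite -e; apply: hP.
Qed.


Lemma qfE n (K : 'M[C]_n) v :
  qf K v = \sum_i \sum_j conjc (v i 0) * K i j * v j 0.
Proof.
rewrite /qf mxE exchange_big /=; apply: eq_bigr => j _.
by rewrite mxE mulr_suml; apply: eq_bigr => i _; rewrite !mxE.
Qed.

Lemma tens11 (A B : 'M[C]_1) : (A *t B : 'M_(1 * 1)) 0 0 = A 0 0 * B 0 0.
Proof.
rewrite [in LHS]mxE; case: (mxtens_unindex _) => a b /=.
by rewrite (ord1 a) (ord1 b).
Qed.

Lemma qf_tens m n (A : 'M[C]_m) (B : 'M[C]_n) (u : 'cV[C]_m) (w : 'cV[C]_n) :
  qf (A *t B) (u *t w) = qf A u * qf B w.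
Proof.
rewrite /qf; change ((adjmx (u *t w) *m (A *t B) *m (u *t w) : 'M_(1*1)) 0 0 = qf A u * qf B w).
by rewrite adjmx_tens !tensmx_mul tens11. Qed.

Lemma proj_tens m n (u : 'cV[C]_m) (w : 'cV[C]_n) :
  proj (u *t w) = proj u *t proj w.
Proof.
rewrite /proj; change ((u *t w) *m adjmx (u *t w) = proj u *t proj w).
by rewrite adjmx_tens tensmx_mul. Qed.

Lemma unit_tens m n (u : 'cV[C]_m) (w : 'cV[C]_n) :
  unit_vec u -> unit_vec w -> unit_vec (u *t w).
Proof.
rewrite /unit_vec => hu hw; change ((adjmx (u *t w) *m (u *t w) : 'M_(1*1)) 0 0 = 1).
by rewrite adjmx_tens tensmx_mul tens11 hu hw mulr1. Qed.

Lemma CP_pos n (E : 'M[C]_n -> 'M[C]_n) : CP E ->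
  forall Y, psd Y -> forall w, 0 <= qf (E Y) w.
Proof.
move=> hCP Y [hYh hYq] w.
pose X : 'M[C]_(1 * n) := \matrix_(a, b) Y (mxtens_unindex a).2 (mxtens_unindex b).2.
have hX : psd X.
  split.
    apply/matrixP => a b; rewrite adjmxE !mxE.
    by rewrite -[in RHS]hYh adjmxE.
  move=> v; rewrite -/(qf X v) qfE sum_tens big_ord1.
  pose w' : 'cV[C]_n := \col_a v (mxtens_index (0, a)) 0.
  have := hYq w'; rewrite -/(qf Y w') qfE.
  congr (_ <= _); apply: eq_bigr => a _; rewrite sum_tens big_ord1.
  by apply: eq_bigr => b _; rewrite !mxE !mxtens_indexK.
have [_ hq] := hCP 1 X hX.
have eA : ampl E X = delta_mx 0 0 *t E Y.
  rewrite /ampl !big_ord1; congr (_ *t E _).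
  by apply/matrixP => a b; rewrite !mxE !mxtens_indexK.
have := hq ((1%:M : 'M[C]_1) *t w); rewrite -/(qf _ _) eA qf_tens.
suff -> : qf (delta_mx 0 0 : 'M[C]_1) 1%:M = 1 by rewrite mul1r.
by rewrite /qf adjmx1 mul1mx mulmx1 mxE.
Qed.

Lemma qf_hs n (E : 'M[C]_n -> 'M[C]_n) : lin_map E ->
  forall M v, qf (hs_adj E M) v = \tr (M *m E (proj v)).
Proof.
move=> hE M v.
rewrite [proj v]matrix_sum_delta linE_sum // tr_mul_sum qfE exchange_big /=.
apply: eq_bigr => i _; rewrite linE_sum // tr_mul_sum; apply: eq_bigr => j _.
rewrite linEZ // -scalemxAr mxtraceZ hs_adjE /proj !mxE big_ord1 !mxE.
by rewrite mulrC mulrA.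
Qed.

Lemma psd_hs n (E : 'M[C]_n -> 'M[C]_n) : channel E ->
  forall p, psd (hs_adj E (proj p)).
Proof.
move=> [hE hCP _] p.
have hq v : 0 <= qf (hs_adj E (proj p)) v.
  rewrite qf_hs // mxtrace_mulC tr_proj.
  exact: (CP_pos hCP (psd_proj v)).
by split => //; apply: posq_herm.
Qed.

Lemma hs_adj1 n (E : 'M[C]_n -> 'M[C]_n) : TP E -> hs_adj E 1%:M = 1%:M.
Proof.
move=> hT; apply/matrixP => i j; rewrite hs_adjE mul1mx hT.
rewrite /mxtrace (bigD1 j) //= big1 ?addr0.
  by rewrite !mxE eqxx andTb eq_sym.
by move=> k /negbTE nk; rewrite mxE nk.
Qed.


Lemma adjmx_proj n (v : 'cV[C]_n) : adjmx (proj v) = proj v.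
Proof. by rewrite /proj adjmxM adjmxK. Qed.

Lemma qf1 n (psi : 'cV[C]_n) : unit_vec psi -> qf 1%:M psi = 1.
Proof. by rewrite /qf mulmx1. Qed.

Lemma qf_proj_le1 n (v psi : 'cV[C]_n) : unit_vec v -> unit_vec psi ->
  qf (proj v) psi <= 1.
Proof.
move=> hv hpsi.
have PP : proj v *m proj v = proj v.
  rewrite /proj mulmxA -[v *m adjmx v *m v]mulmxA.
  have -> : adjmx v *m v = 1%:M by rewrite [adjmx v *m v]mx11_scalar hv.
  by rewrite mulmx1.
have e1 : 1%:M - proj v = adjmx (1%:M - proj v) *m (1%:M - proj v).
  rewrite adjmxD adjmxN adjmx1 adjmx_proj.
  by rewrite mulmxBl mul1mx mulmxBr mulmx1 PP subrr subr0.
have h0 : 0 <= qf (1%:M - proj v) psi.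
  by rewrite e1; have [_ h] := psd_AtA (1%:M - proj v); exact: h.
by move: h0; rewrite qfD qfN qf1 // subr_ge0.
Qed.

Lemma tens_decomp n (A B : 'M[C]_n) : psd A -> psd B ->
  exists c : 'I_n -> 'I_n -> C, exists v : 'I_n -> 'I_n -> 'cV[C]_(n * n),
   [/\ forall i j, 0 <= c i j, forall i j, unit_vec (v i j) &
       A *t B = \sum_i \sum_j c i j *: proj (v i j)].
Proof.
move=> /psd_decomp [d [u [hd hu eA]]] /psd_decomp [e [w [he hw eB]]].
exists (fun i j => d i * e j), (fun i j => u i *t w j); split.
- by move=> i j; apply: mulr_ge0.
- by move=> i j; apply: unit_tens.
rewrite eA eB tens_suml; apply: eq_bigr => i _.
rewrite tens_sumr; apply: eq_bigr => j _.
by rewrite tensZl tensZr scalerA proj_tens.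
Qed.

Lemma qf_decomp_bounds n (m : nat) (c : 'I_m -> 'I_m -> C) (v : 'I_m -> 'I_m -> 'cV[C]_n) psi :
  (forall i j, 0 <= c i j) -> (forall i j, unit_vec (v i j)) -> unit_vec psi ->
  0 <= qf (\sum_i \sum_j c i j *: proj (v i j)) psi <= \sum_i \sum_j c i j.
Proof.
move=> hc hv hpsi; rewrite qf_sum; apply/andP; split.
  apply: sumr_ge0 => i _; rewrite qf_sum; apply: sumr_ge0 => j _.
  rewrite qfZ; apply: mulr_ge0 => //.
  by have [_ h] := psd_proj (v i j); exact: h.
apply: ler_sum => i _; rewrite qf_sum; apply: ler_sum => j _.
rewrite qfZ -[X in _ <= X]mulr1; apply: ler_wpM2l => //.
exact: qf_proj_le1.
Qed.


Lemma xlnx_bound (x : R) : 0 <= x -> - (x * ln x) <= 1.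
Proof.
rewrite le_eqVlt => /orP[/eqP <-|x0]; first by rewrite mul0r oppr0.
have h : - ln x <= x^-1 - 1.
  have := @le_ln1Dx R (x^-1 - 1); rewrite [1 + _]addrC subrK lnV ?posrE //; apply.
  have : 0 < x^-1 by rewrite invr_gt0. lra.
rewrite -mulrN; apply: (le_trans (ler_wpM2l (ltW x0) h)).
by rewrite mulrBr mulfV ?gt_eqF // mulr1 gerBl ltW.
Qed.

Lemma unit_delta n (i : 'I_n) : unit_vec (delta_mx i 0 : 'cV[C]_n).
Proof. by rewrite /unit_vec adjmx_delta mul_delta_mx mxE !eqxx. Qed.

Lemma Hs_nonempty n (s : R) : (0 < n)%N -> s <= ln n%:R ->
  exists psi : 'cV[C]_(n * n), in_Hs s psi.
Proof.
move=> hn hs.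
have n0 : (0 : R) < n%:R by rewrite ltr0n.
pose lam0 : 'I_n -> R := fun _ => n%:R^-1.
pose c : C := Complex (Num.sqrt (n%:R^-1)) 0.
pose psi0 : 'cV[C]_(n * n) := \sum_(j < n) Complex (Num.sqrt (lam0 j)) 0 *: (col j 1%:M *t col j 1%:M).
have hsch : Defs.schmidt psi0 lam0.
  split; first by move=> j; rewrite /lam0 invr_ge0 ler0n.
  by exists 1%:M, 1%:M; split => //; rewrite /unitary adjmx1 mul1mx.
have epsi a b : psi0 (mxtens_index (a, b)) 0 = c * (a == b)%:R.
  rewrite summxE (bigD1 a) //= big1 ?addr0.
    by rewrite mxE [in LHS]mxE mxtens_indexK /= !mxE eqxx mul1r eq_sym.
  move=> j /negbTE nja; rewrite mxE [in LHS]mxE mxtens_indexK /=.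
  by rewrite !mxE eq_sym nja mul0r mulr0.
have cc : conjc c * c = ((n%:R^-1 : R)%:C)%C.
  apply/eqP; rewrite eq_complex /= oppr0 !mulr0 !mul0r subr0 addr0 eqxx andbT; apply/eqP.
  by rewrite -expr2 sqr_sqrtr // invr_ge0 ler0n.
have hunit : unit_vec psi0.
  rewrite /unit_vec mxE sum_tens.
  transitivity (\sum_(a < n) conjc c * c).
    apply: eq_bigr => a _; rewrite (bigD1 a) //= big1 ?addr0.
      by rewrite adjmxE epsi eqxx mulr1.
    by move=> b /negbTE nba; rewrite adjmxE epsi eq_sym nba mulr0 conjc0 mul0r.
  rewrite sumr_const card_ord cc -rmorphMn /=.
  by rewrite -mulr_natr mulVf ?gt_eqF.
exists psi0; split => //.
apply: (le_trans hs).
have hS : has_sup [set h | exists lam, Defs.schmidt psi0 lam /\ h = - \sum_(j < n) lam j * ln (lam j)].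
  split; first by exists (- \sum_(j < n) lam0 j * ln (lam0 j)), lam0.
  exists n%:R => h [lam [[hlam _] ->]].
  rewrite -sumrN; apply: (@le_trans _ _ (\sum_(j < n) (1:R))).
    by apply: ler_sum => j _; apply: xlnx_bound.
  by rewrite sumr_const card_ord.
have := sup_upper_bound hS (x := - \sum_(j < n) lam0 j * ln (lam0 j)).
rewrite /ent; move=> h; apply: le_trans (h _); last by exists lam0.
have e : (n%:R^-1 : R) *+ n = 1.
  by rewrite -(mulr_natr (n%:R^-1 : R) n) mulVf ?gt_eqF.
by rewrite /lam0 sumr_const card_ord lnV ?posrE // mulrN mulNrn opprK -mulrnAl e mul1r.
Qed.


Lemma log_ratio_le (jmax jmin eps : R) : 0 <= jmin -> jmin <= jmax ->
  (log_ratio jmax jmin <= eps%:E)%E <-> (jmax <= expR eps * jmin /\ 0 <= eps).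
Proof.
move=> h0 h1; rewrite /log_ratio.
case: ifPn => [hpos|hnp].
  have hmax : 0 < jmax := lt_le_trans hpos h1.
  have hr : 0 < jmax / jmin by rewrite divr_gt0.
  have hr1 : 1 <= jmax / jmin by rewrite ler_pdivlMr // mul1r.
  rewrite lee_fin; split.
    move=> hl; split; last exact: le_trans (ln_ge0 hr1) hl.
    have : jmax / jmin <= expR eps.
      by rewrite -ler_ln ?posrE ?expR_gt0 // expRK.
    by rewrite ler_pdivrMr // mulrC.
  move=> [hl _]; rewrite -[X in _ <= X]expRK ler_ln ?posrE ?expR_gt0 //.
  by rewrite ler_pdivrMr // mulrC.
have j0 : jmin = 0 by apply/eqP; rewrite eq_le h0 andbT leNgt.
rewrite j0 mulr0; case: ifPn => [hmax|hnmax].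
  by split => // -[hl _]; move: hmax; rewrite ltNge hl.
rewrite lee_fin; split; last by case.
by move=> h; split => //; rewrite leNgt.
Qed.

Lemma log_ratio_ge0 (jmax jmin : R) : 0 <= jmin -> jmin <= jmax ->
  (0%:E <= log_ratio jmax jmin)%E.
Proof.
move=> h0 h1; rewrite /log_ratio; case: ifPn => [hpos|_].
  rewrite lee_fin; apply: ln_ge0.
  by rewrite ler_pdivlMr // mul1r.
by case: ifPn => _; rewrite ?leey ?lexx.
Qed.

Lemma tens1 m n : (1%:M : 'M[C]_m) *t (1%:M : 'M[C]_n) = 1%:M.
Proof.
apply/matrixP => a b.
case: (mxtens_indexP a) => i j; case: (mxtens_indexP b) => k l.
rewrite tensmxE !mxE -natrM mulnb.
by rewrite (inj_eq (can_inj (@mxtens_indexK m n))) xpair_eqE.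
Qed.

Lemma psd_1proj n (v : 'cV[C]_n) : unit_vec v -> psd (1%:M - proj v).
Proof.
move=> hv.
have PP : proj v *m proj v = proj v.
  rewrite /proj mulmxA -[v *m adjmx v *m v]mulmxA.
  have -> : adjmx v *m v = 1%:M by rewrite [adjmx v *m v]mx11_scalar hv.
  by rewrite mulmx1.
have -> : 1%:M - proj v = adjmx (1%:M - proj v) *m (1%:M - proj v).
  rewrite adjmxD adjmxN adjmx1 adjmx_proj.
  by rewrite mulmxBl mul1mx mulmxBr mulmx1 PP subrr subr0.
exact: psd_AtA.
Qed.


Section Main.
Local Open Scope classical_set_scope.
Variables (N : nat) (EA EB : 'M[C]_N -> 'M[C]_N) (s : R).
Hypotheses (hN : (0 < N)%N) (hsN : s <= ln N%:R) (hA : channel EA) (hB : channel EB).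

Definition val pa pb (psi : 'cV[C]_(N * N)) : R :=
  complex.Re (qf (K_phi EA EB pa pb) psi).
Let Hs := [set psi : 'cV[C]_(N * N) | in_Hs s psi]%classic.
Let S pa pb := [set val pa pb psi | psi in Hs]%classic.

Lemma Jmax_S pa pb : Jmax (K_phi EA EB pa pb) s = sup (S pa pb).
Proof. by []. Qed.
Lemma Jmin_S pa pb : Jmin (K_phi EA EB pa pb) s = inf (S pa pb).
Proof. by []. Qed.

Lemma Hs_ne : Hs !=set0.
Proof. by have [psi h] := Hs_nonempty hN hsN; exists psi. Qed.

Lemma val_bounds pa pb : exists B, forall psi, unit_vec psi -> 0 <= val pa pb psi <= B.
Proof.
have [c [v [hc hv eK]]] := tens_decomp (psd_hs hA pa) (psd_hs hB pb).
exists (complex.Re (\sum_i \sum_j c i j)) => psi hpsi.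
have /andP[l u] := qf_decomp_bounds hc hv hpsi.
rewrite /val /K_phi eK; apply/andP; split; [exact: ge0_Re | exact: le_Re].
Qed.

Lemma S_props pa pb : [/\ S pa pb !=set0, has_sup (S pa pb), has_lbound (S pa pb),
  lbound (S pa pb) 0 & 0 <= inf (S pa pb) <= sup (S pa pb)].
Proof.
have [psi hpsi] := Hs_ne.
have ne : S pa pb !=set0 by exists (val pa pb psi), psi.
have [B hB'] := val_bounds pa pb.
have lb : lbound (S pa pb) 0 by move=> _ [p hp <-]; have /andP[] := hB' p hp.1.
have ub : ubound (S pa pb) B by move=> _ [p hp <-]; have /andP[] := hB' p hp.1.
have hs : has_sup (S pa pb) by split => //; exists B.
have hl : has_lbound (S pa pb) by exists 0.
split => //; apply/andP; split; first exact: lb_le_inf.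
have [x Sx] := ne.
exact: le_trans (ge_inf hl Sx) (sup_upper_bound hs Sx).
Qed.

Lemma step_char pa pb eps :
  (forall psi psi', Hs psi -> Hs psi' -> val pa pb psi <= expR eps * val pa pb psi') <->
  Jmax (K_phi EA EB pa pb) s <= expR eps * Jmin (K_phi EA EB pa pb) s.
Proof.
rewrite Jmax_S Jmin_S.
have [ne hs hl _ _] := S_props pa pb.
have ce : 0 < expR eps := expR_gt0 eps.
split.
  move=> h; apply: ge_sup => // _ [p hp <-].
  rewrite mulrC -ler_pdivrMr //; apply: lb_le_inf => // _ [q hq <-].
  by rewrite ler_pdivrMr // mulrC; apply: h.
move=> h psi psi' hp hp'.
have h1 : val pa pb psi <= sup (S pa pb).
  by apply: sup_upper_bound => //; exists psi.
have h2 : inf (S pa pb) <= val pa pb psi'.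
  by apply: ge_inf => //; exists psi'.
apply: le_trans h1 _; apply: le_trans h _; apply: ler_wpM2l => //.
Qed.

Lemma val_decomp (Ma Mb : 'M[C]_N) : psd Ma -> psd Mb ->
  exists r : 'I_N -> 'I_N -> R, exists u w : 'I_N -> 'cV[C]_N,
  [/\ forall i j, 0 <= r i j, forall i, unit_vec (u i), forall j, unit_vec (w j) &
   forall psi, complex.Re (qf (hs_adj EA Ma *t hs_adj EB Mb) psi) =
     \sum_i \sum_j r i j * val (u i) (w j) psi].
Proof.
move=> /psd_decomp [d [u [hd hu eA]]] /psd_decomp [e [w [he hw eB]]].
exists (fun i j => complex.Re (d i * e j)), u, w; split => //.
  by move=> i j; apply: ge0_Re; apply: mulr_ge0.
move=> psi.
have -> : hs_adj EA Ma *t hs_adj EB Mb =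
    \sum_i \sum_j (d i * e j) *: K_phi EA EB (u i) (w j).
  rewrite eA eB !hs_adj_sum tens_suml; apply: eq_bigr => i _.
  rewrite tens_sumr; apply: eq_bigr => j _.
  by rewrite !hs_adjZ tensZl tensZr scalerA.
rewrite qf_sum Re_sum; apply: eq_bigr => i _; rewrite qf_sum Re_sum.
apply: eq_bigr => j _; rewrite qfZ (@ReM_real (d i * e j)) //.
by apply: ge0_Im; apply: mulr_ge0.
Qed.

Definition Pgood eps := 0 <= eps /\ forall pa pb, unit_vec pa -> unit_vec pb ->
  forall psi psi', Hs psi -> Hs psi' -> val pa pb psi <= expR eps * val pa pb psi'.

Lemma povm_unit : povm (fun _ : unit => (1%:M : 'M[C]_N)).
Proof.
split; first by move=> _; rewrite -[1%:M]mul1mx -{1}adjmx1; apply: psd_AtA.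
by rewrite (big_pred1 tt) // => -[].
Qed.

Lemma povm_bool pa : unit_vec pa ->
  povm (fun b : bool => if b then proj pa else (1%:M - proj pa : 'M[C]_N)).
Proof.
move=> hpa; split; first by case; [apply: psd_proj | apply: psd_1proj].
by rewrite big_bool /= addrC subrK.
Qed.

Lemma qldp_iff eps : eclm_qldp (prod_chan EA EB) s eps <-> Pgood eps.
Proof.
split.
  move=> hq; split.
    have [psi hpsi] := Hs_ne.
    have := hq _ _ _ _ povm_unit povm_unit psi psi hpsi hpsi [set (tt, tt)]%SET.
    rewrite !big_set1 !lm_probE /= !hs_adj1; try by case: hA; try by case: hB.
    rewrite tens1 qf1; last exact: hpsi.1.
    rewrite /= mulr1 => h1.
    by rewrite -[eps]expRK; apply: ln_ge0.
  move=> pa pb hpa hpb psi psi' hp hp'.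
  have := hq _ _ _ _ (povm_bool hpa) (povm_bool hpb) psi psi' hp hp' [set (true, true)]%SET.
  by rewrite !big_set1 !lm_probE.
move=> [h0 h] OA OB MA MB [hMA _] [hMB _] psi psi' hp hp' T.
rewrite mulr_sumr; apply: ler_sum => -[a b] _; rewrite !lm_probE /=.
have [r [u [w [hr hu hw e]]]] := val_decomp (hMA a) (hMB b).
rewrite !e mulr_sumr; apply: ler_sum => i _; rewrite mulr_sumr; apply: ler_sum => j _.
rewrite mulrCA; apply: ler_wpM2l; first exact: hr.
exact: h.
Qed.

Lemma unit_ex : exists pa : 'cV[C]_N, unit_vec pa.
Proof. by exists (delta_mx (Ordinal hN) 0); apply: unit_delta. Qed.

Lemma formula_iff eps : (eps_formula EA EB s <= eps%:E)%E <-> Pgood eps.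
Proof.
split.
  move=> h.
  have hl pa pb : unit_vec pa -> unit_vec pb ->
      Jmax (K_phi EA EB pa pb) s <= expR eps * Jmin (K_phi EA EB pa pb) s /\ 0 <= eps.
    move=> hpa hpb; have [_ _ _ _ /andP[l1 l2]] := S_props pa pb.
    apply/log_ratio_le => //; apply: le_trans h.
    by apply: ereal_sup_ubound; exists pa => //; exists pb.
  have [pa hpa] := unit_ex.
  split; first by have [] := hl pa pa hpa hpa.
  move=> pb pc hpb hpc; apply/step_char.
  by have [] := hl pb pc hpb hpc.
move=> [h0 h]; apply/ereal_supP => _ [pa hpa [pb hpb <-]].
have [_ _ _ _ /andP[l1 l2]] := S_props pa pb.
apply/log_ratio_le => //; split => //.
by apply/step_char; apply: h.
Qed.

Lemma formula_ge0 : (0%:E <= eps_formula EA EB s)%E.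
Proof.
have [pa hpa] := unit_ex.
have [_ _ _ _ /andP[l1 l2]] := S_props pa pa.
apply: le_trans (log_ratio_ge0 l1 l2) _.
by apply: ereal_sup_ubound; exists pa => //; exists pa.
Qed.

Lemma eps_star_eq : eps_star (prod_chan EA EB) s = eps_formula EA EB s.
Proof.
apply/eqP; rewrite eq_le; apply/andP; split.
  have := formula_ge0; case hE: (eps_formula EA EB s) => [f| |] //= hf.
    apply: ereal_inf_lbound; exists f => //.
    by apply/qldp_iff/formula_iff; rewrite hE.
  exact: leey.
apply: le_ereal_inf_tmp => _ [x hx <-].
by apply/formula_iff/qldp_iff.
Qed.

End Main.

End Q.

Unset Implicit Arguments.

Theorem theorem2 (R : realType) (N : nat) (s : R)
  (EA EB : 'M[R[i]]_N -> 'M[R[i]]_N) :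
  (0 < N)%N -> 0 <= s -> s <= ln (N%:R) ->
  channel EA -> channel EB ->
  eps_star (prod_chan EA EB) s = eps_formula EA EB s /\
  (forall eps : R, eclm_qldp (prod_chan EA EB) s eps <->
                   (eps_formula EA EB s <= eps%:E)%E).
Proof.
move=> hN _ hsN hA hB; split; first exact: eps_star_eq.
move=> eps; split.
  by move/(qldp_iff hN hsN hA hB)/(formula_iff hN hsN hA hB).
by move/(formula_iff hN hsN hA hB)/(qldp_iff hN hsN hA hB).
Qed.
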